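(* Let $J^P_{k,n}$ be the number of maximal configurations resistant to predators of length $n$ with exactly $k$ occupied lots (the empty configuration of length $0$ being counted once). Then, as formal power series, $$\sum_{n\ge 0}\sum_{k\ge 0} J^P_{k,n}x^ky^n = \frac{1 + xy - (x - x^2)y^2 - x^2y^3}{1 - xy^2 - x^2y^3}.$$
   Context: A configuration of length $n\ge 0$ is a binary string $c_1c_2\cdots c_n$; $c_k=1$ means lot $k$ is occupied by a house, $c_k=0$ that it is empty. A house at position $k$ is blocked if $2\le k\le n-1$ and $c_{k-1}=c_{k+1}=1$ (lots beyond the ends never obstruct sunlight). A configuration is permissible if no house is blocked; maximal if it is permissible and, for every $k$ with $c_k=0$, setting $c_k=1$ yields a non-permissible string. A maximal configuration is resistant to predators if, for every $k$ with $c_k=0$, setting $c_k=1$ makes the new house at position $k$ blocked. *)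

(* Defs.v *)
From mathcomp Require Import all_boot all_order all_algebra.
Set Implicit Arguments. Unset Strict Implicit. Unset Printing Implicit Defensive.
Import GRing.Theory Num.Theory.

(* A configuration of length n is a bit sequence c; lot k (1-based in the paper)
   is index k-1 here (0-based).  c_i = true means lot i is occupied. *)

Definition lot (c : seq bool) (i : nat) : bool := nth false c i.

Definition blocked (c : seq bool) (i : nat) : bool :=
  [&& 0 < i, i.+1 < size c, lot c i.-1 & lot c i.+1].

Definition permissible (c : seq bool) : bool :=
  all (fun i => lot c i ==> ~~ blocked c i) (iota 0 (size c)).

Definition occupy (c : seq bool) (i : nat) : seq bool := set_nth false c i true.

Definition maximal (c : seq bool) : bool :=
  permissible c &&
  all (fun i => ~~ lot c i ==> ~~ permissible (occupy c i)) (iota 0 (size c)).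

Definition resistant (c : seq bool) : bool :=
  maximal c &&
  all (fun i => ~~ lot c i ==> blocked (occupy c i) i) (iota 0 (size c)).

Definition JP (k n : nat) : nat :=
  #|[set c : n.-tuple bool | resistant c & count id c == k]|.

(* Formal power series in x, y with integer coefficients, represented by
   their coefficient function: f k n = coefficient of x^k y^n. *)
Definition series := nat -> nat -> int.

Definition series_mul (f g : series) : series :=
  fun k n => (\sum_(i < k.+1) \sum_(j < n.+1) f i j * g (k - i)%N (n - j)%N)%R.

Definition JP_series : series := fun k n => Posz (JP k n).

Definition numer : series := fun k n =>
  match k, n with
  | 0, 0 => 1%R
  | 1, 1 => 1%R
  | 1, 2 => (-1)%R
  | 2, 2 => 1%R
  | 2, 3 => (-1)%R
  | _, _ => 0%R
  end.

(* Denominator 1 - x y^2 - x^2 y^3 (invertible, constant term 1). *)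
Definition denom : series := fun k n =>
  match k, n with
  | 0, 0 => 1%R
  | 1, 2 => (-1)%R
  | 2, 3 => (-1)%R
  | _, _ => 0%R
  end.

(* Main.v *)
Require Import Defs.
From mathcomp Require Import all_boot all_order all_algebra zify.
From Stdlib Require Import FunctionalExtensionality.
Import GRing.Theory Num.Theory.


Fixpoint W (s : seq bool) : bool :=
  match s with
  | l :: ((m :: r :: _) as s') => (m == ~~ (l && r)) && W s'
  | _ => true
  end.

Definition valid (c : seq bool) := W (false :: rcons c false).

Lemma W_all s : W s = all (fun j => nth false s j.+1 == ~~ (nth false s j && nth false s j.+2))
   (iota 0 (size s - 2)).
Proof.
elim: s => [|l s IH] //.
case: s IH => [|m [|r t]] IH //.
have -> : W [:: l, m, r & t] = (m == ~~(l&&r)) && W [:: m, r & t] by [].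
rewrite IH.
have -> : (size [:: l, m, r & t] - 2 = (size t).+1)%N by [].
have -> : (size [:: m, r & t] - 2 = size t)%N by rewrite /= subn2.
rewrite [iota 0 (size t).+1]/= .
have -> : iota 1 (size t) = map (addn 1) (iota 0 (size t)) by rewrite -iotaDl.
rewrite [all _ (_ :: _)]/= all_map.
congr andb; by apply: eq_all => j.
Qed.

Lemma nthr c j : nth false (rcons c false) j = nth false c j.
Proof.
rewrite nth_rcons; case: ltnP => // h; rewrite nth_default //; by case: eqP.
Qed.

Lemma lot_big c j : size c <= j -> lot c j = false.
Proof. by move=> h; rewrite /lot nth_default. Qed.

Lemma blocked_occ c i : i < size c ->
  blocked (occupy c i) i = [&& 0 < i, i.+1 < size c, lot c i.-1 & lot c i.+1].
Proof.
move=> hi; rewrite /blocked /occupy /lot size_set_nth !nth_set_nth /=.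
have -> : maxn i.+1 (size c) = size c by apply/maxn_idPr.
case: i hi => [|i] hi //=.
by rewrite (ltn_eqF (ltnSn i)) (gtn_eqF (ltnSn i.+1)).
Qed.

Lemma resistant_valid c : resistant c = valid c.
Proof.
rewrite /valid W_all /= size_rcons subn2 /=.
have allR : all (fun i => ~~ lot c i ==> blocked (occupy c i) i) (iota 0 (size c)) =
   all (fun i => ~~ lot c i ==> [&& 0 < i, i.+1 < size c, lot c i.-1 & lot c i.+1]) (iota 0 (size c)).
  apply: eq_in_all => i; rewrite mem_iota add0n => /andP[_ hi].
  by rewrite blocked_occ.
have -> : resistant c = permissible c &&
   all (fun i => ~~ lot c i ==> [&& 0 < i, i.+1 < size c, lot c i.-1 & lot c i.+1]) (iota 0 (size c)).
  rewrite /resistant /maximal -allR.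
  case hp: (permissible c) => //=.
  case hr: (all (fun i => ~~ lot c i ==> blocked (occupy c i) i) _); rewrite ?andbF // andbT.
  apply/allP => i hi; apply/implyP => hl.
  have := allP hr i hi; rewrite hl /= => hb.
  move: hi; rewrite mem_iota add0n => /andP[_ hi].
  apply/negP => /allP /(_ i).
  rewrite size_set_nth (maxn_idPr hi) mem_iota add0n hi => /(_ isT).
  by rewrite {1}/lot nth_set_nth /= eqxx /= hb.
rewrite /permissible -all_predI.
apply: eq_in_all => i; rewrite mem_iota add0n => /andP[_ hi].
transitivity ((lot c i ==> ~~ blocked c i) && (~~ lot c i ==> [&& 0 < i, i.+1 < size c, lot c i.-1 & lot c i.+1])); first by [].
have hp : nth false (false :: rcons c false) i = (0 < i) && lot c i.-1.
  by case: i {hi} => [|i] //=; rewrite nthr.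
rewrite hp !nthr /blocked -/(lot c i) -/(lot c i.+1).
have hl : lot c i.+1 ==> (i.+1 < size c).
  by apply/implyP => h; case: ltnP => // h'; rewrite lot_big in h.
move: hl; case: (lot c i); case: (lot c i.+1); case: (i.+1 < size c); case: (0 < i); by case: (lot c i.-1).
Qed.

Lemma valid_nil : valid [::]. Proof. by []. Qed.
Lemma valid_0 t : valid (false :: t) = false.
Proof. by case: t => [|a [|b t]] //=; case: a. Qed.
Lemma valid_111 t : valid [:: true, true, true & t] = false.
Proof. by []. Qed.
Lemma valid_10 t : valid [:: true, false & t] = (t != [::]) && valid t.
Proof. by case: t => [|a [|b t]] //=; case: a => //=; case: b. Qed.
Lemma valid_110 t : valid [:: true, true, false & t] = (t != [::]) && valid t.
Proof. by case: t => [|a [|b t]] //=; case: a => //=; case: b. Qed.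

Definition L n : seq (seq bool) := map val (enum {: n.-tuple bool}).
Lemma L_uniq n : uniq (L n).
Proof. rewrite map_inj_uniq ?enum_uniq //; exact: val_inj. Qed.
Lemma memL n s : (s \in L n) = (size s == n).
Proof.
apply/mapP/idP => [[t _ ->]|hs]; first by rewrite size_tuple.
by exists (Tuple hs); rewrite ?mem_enum.
Qed.

Definition P k s := valid s && (count id s == k).

Lemma bridge n (Q : seq bool -> bool) :
  #|[set c : n.-tuple bool | Q c]| = count Q (map val (enum {: n.-tuple bool})).
Proof. by rewrite cardsE cardE count_map -size_filter enumT /enum_mem. Qed.

Lemma JP_L k n : JP k n = count (P k) (L n).
Proof.
rewrite /JP (bridge n (fun s => resistant s && (count id s == k))).
by apply: eq_count => s; rewrite resistant_valid.
Qed.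

Lemma count_mem (A B : seq (seq bool)) p : uniq A -> uniq B ->
  (forall s, (s \in A) && p s = (s \in B) && p s) -> count p A = count p B.
Proof.
move=> uA uB h; rewrite -!size_filter; apply: perm_size; apply: uniq_perm;
  rewrite ?filter_uniq // => s.
by rewrite !mem_filter andbC h andbC.
Qed.

Lemma JP0 k : JP k 0 = (k == 0).
Proof.
rewrite JP_L (@count_mem _ [:: [::]]) ?L_uniq //=; first by rewrite addn0 /P /= eq_sym.
move=> s; rewrite memL inE; case: s => [|a s] //=.
Qed.

Lemma JP1 k : JP k 1 = (k == 1).
Proof.
rewrite JP_L (@count_mem _ [:: [:: true]]) ?L_uniq //=; first by rewrite addn0 /P /= eq_sym.
move=> s; rewrite memL inE; case: s => [|a [|b s]] //=; rewrite /P; case: a => //=.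
Qed.

Lemma JP2 k : JP k 2 = (k == 2).
Proof.
rewrite JP_L (@count_mem _ [:: [:: true; true]]) ?L_uniq //=; first by rewrite addn0 /P /= eq_sym.
move=> s; rewrite memL inE; case: s => [|a [|b [|c s]]] //=.
all: rewrite /P; try (case: a); try (case: b); by rewrite /= ?eqseq_cons ?andbF.
Qed.

Lemma JP3 k : JP k 3 = (k == 2).
Proof.
rewrite JP_L (@count_mem _ [:: [:: true; false; true]]) ?L_uniq //=; first by rewrite addn0 /P /= eq_sym.
move=> s; rewrite memL inE; case: s => [|a [|b [|c [|d s]]]] //=.
all: rewrite /P; try (case: a); try (case: b); try (case: c); by rewrite /= ?eqseq_cons ?andbF.
Qed.

Definition f1 (t : seq bool) := [:: true, false & t].
Definition f2 (t : seq bool) := [:: true, true, false & t].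

Lemma JPrec k m : JP k m.+4 =
  ((if k is k'.+1 then JP k' m.+2 else 0) + (if k is k'.+2 then JP k' m.+1 else 0))%N.
Proof.
rewrite JP_L (@count_mem _ (map f1 (L m.+2) ++ map f2 (L m.+1))) ?L_uniq //.
- rewrite count_cat (count_map f1) (count_map f2).
  have e1 : count (preim f1 (P k)) (L m.+2) = if k is k'.+1 then JP k' m.+2 else 0.
    rewrite (@eq_in_count _ _ (fun t => valid t && ((count id t).+1 == k))); last first.
      move=> t; rewrite memL => /eqP ht; rewrite /= /P valid_10.
      by case: t ht.
    case: k => [|k]; first by rewrite (@eq_count _ _ pred0) ?count_pred0 // => t /=; rewrite andbF.
    by rewrite JP_L.
  have e2 : count (preim f2 (P k)) (L m.+1) = if k is k'.+2 then JP k' m.+1 else 0.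
    rewrite (@eq_in_count _ _ (fun t => valid t && ((count id t).+2 == k))); last first.
      move=> t; rewrite memL => /eqP ht; rewrite /= /P valid_110.
      by case: t ht.
    clear e1; case: k => [|[|k]]; try by rewrite (@eq_count _ _ pred0) ?count_pred0 // => t /=; rewrite andbF.
    by rewrite JP_L.
  by rewrite e1 e2.
- have i1 : injective f1 by move=> x y [].
  have i2 : injective f2 by move=> x y [].
  rewrite cat_uniq (map_inj_uniq i1) (map_inj_uniq i2) !L_uniq andbT /=.
  apply/hasPn => s /mapP [t _ ->]; apply/mapP => [[u _]] //.
- move=> s; rewrite memL mem_cat; apply/andP/andP => [[hs hp]|[hs hp]]; split => //.
    case: s hs hp => [|a [|b [|c r]]] //= hs; case: a; rewrite ?valid_0 /P ?andFb //.
    case: b => hp.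
      case: c hp => hp; first by rewrite /P valid_111 in hp.
      by apply/orP; right; apply/mapP; exists r; rewrite ?memL.
    by apply/orP; left; apply/mapP; exists (c :: r); rewrite ?memL.
  by case/orP: hs => /mapP [t]; rewrite memL => /eqP <- ->.
Qed.
Local Open Scope ring_scope.

Lemma L1 (G : nat -> int) m a :
  \sum_(i < m.+1) ((m - i == a)%N%:R * G i) = if (a <= m)%N then G (m - a)%N else 0.
Proof.
elim: m G => [|m IH] G.
  rewrite big_ord_recl big_ord0 addr0 /= sub0n.
  case: a => [|a] /=.
  - by rewrite subnn; lia.
  - lia.
rewrite big_ord_recl /=.
under eq_bigr => i _ do rewrite /bump /= add1n subSS.
rewrite (IH (fun i => G i.+1)) subn0.
case: (eqVneq a m.+1) => [->|ha].
  rewrite ?eqxx ltnn leqnn subnn.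
  by rewrite /= mul1r addr0.
rewrite /= mul0r add0r.
case: (leqP a m) => h.
  by rewrite (leq_trans h (leqnSn _)) subSn.
by rewrite leqNgt ltn_neqAle eq_sym ha h.
Qed.

Lemma S2 (F : nat -> nat -> int) k n a b :
  \sum_(i < k.+1) \sum_(j < n.+1) (F i j * (((k - i == a) && (n - j == b))%N)%:R) =
  if (a <= k)%N && (b <= n)%N then F (k - a)%N (n - b)%N else 0.
Proof.
under eq_bigr => i _.
  under eq_bigr => j _ do rewrite -mulnb natrM mulrC -mulrA.
  rewrite -mulr_sumr (L1 (fun j => F i j)).
  over.
rewrite /=.
case: (b <= n)%N; last first.
  by rewrite andbF big1 // => i _; rewrite mulr0.
by rewrite andbT (L1 (fun i => F i (n - b)%N)).
Qed.

Lemma denomE a b : denom a b =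
  ((a == 0) && (b == 0))%N%:R - ((a == 1) && (b == 2))%N%:R - ((a == 2) && (b == 3))%N%:R.
Proof. by case: a => [|[|[|a]]]; case: b => [|[|[|[|b]]]]. Qed.

Theorem mainTheorem4 : series_mul JP_series denom = numer.
Proof.
apply: functional_extensionality => k; apply: functional_extensionality => n.
rewrite /series_mul.
under eq_bigr => i _.
  under eq_bigr => j _ do rewrite denomE !mulrBr.
  rewrite !sumrB.
  over.
rewrite !sumrB !S2 /JP_series.
case: n => [|[|[|[|m]]]]; case: k => [|[|[|k]]];
  rewrite /= ?subn0 ?subSS ?sub0n ?subn0 ?JP0 ?JP1 ?JP2 ?JP3 ?JPrec //=.
all: by rewrite PoszD; lia.
Qed.
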